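(* Fix $\epsilon\in(0,1)$. For a permutation of $[n]$ ($n$ even) chosen uniformly among those with all cycle lengths even, and even $k$, the expected number $\mathbb{E}_e^{(n)}Y_k$ of elements in $k$-cycles satisfies, uniformly, \[ \mathbb{E}_e^{(n)}Y_k\to\left(1-\frac kn\right)^{-1/2} \] as $k,n\to\infty$ with $0<k/n<1-\epsilon$; that is, $\mathbb{E}_e^{(n)}Y_k=\left(1-\frac kn\right)^{-1/2}(1+O(n^{-1}))$ with the implied constant uniform over such $k,n$.
   Context: $\mathbb{E}_e^{(n)}$ denotes expectation under the uniform measure on permutations of $[n]$ with all cycle lengths even. $Y_k=kX_k$, where $X_k$ is the number of $k$-cycles. *)

(* Defs.v *)
From HB Require Import structures.
From mathcomp Require Import all_boot all_order all_algebra all_fingroup.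
From mathcomp Require Import reals.
Set Implicit Arguments. Unset Strict Implicit. Unset Printing Implicit Defensive.
Import Order.TTheory GRing.Theory Num.Theory.
Local Open Scope ring_scope.

Definition even_cycle_perms (n : nat) : {set {perm 'I_n}} :=
  [set s : {perm 'I_n} | [forall C in porbits s, ~~ odd #|C|]].

Definition Xk (n k : nat) (s : {perm 'I_n}) : nat :=
  #|[set C in porbits s | #|C| == k]|.

Definition Yk (n k : nat) (s : {perm 'I_n}) : nat := (k * Xk k s)%N.

Definition EeYk (R : realType) (n k : nat) : R :=
  (\sum_(s in even_cycle_perms n) (Yk k s)%:R) / (#|even_cycle_perms n|)%:R.

(* Main.v *)
Require Import Defs.
From HB Require Import structures.
From mathcomp Require Import all_boot all_order all_algebra all_fingroup.
From mathcomp Require Import reals.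
From mathcomp Require Import ring lra.
Set Implicit Arguments. Unset Strict Implicit. Unset Printing Implicit Defensive.

Section Comb.
Local Open Scope group_scope.
Variable T : finType.
Implicit Types (A B C D : {set T}) (s t c r : {perm T}).

Lemma iter_closed B s y i : (forall z, z \in B -> s z \in B) -> y \in B -> (s ^+ i) y \in B.
Proof. move=> hB yB; elim: i => [|i IH]; first by rewrite expg0 perm1.
by rewrite expgSr permM hB. Qed.

Lemma porbit_sub B s y : (forall z, z \in B -> s z \in B) -> y \in B -> porbit s y \subset B.
Proof. move=> hB yB; apply/subsetP=> z /porbitP[i ->]; exact: iter_closed. Qed.

Lemma porbit_agree B s t y : (forall z, z \in B -> s z \in B) ->
  (forall z, z \in B -> s z = t z) -> y \in B -> porbit s y = porbit t y.
Proof.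
move=> hB hst yB.
have E i : (s ^+ i) y = (t ^+ i) y.
  elim: i => [|i IH]; first by rewrite !expg0.
  by rewrite !expgSr !permM -IH hst // iter_closed.
by apply/setP=> z; apply/porbitP/porbitP => -[i ->]; exists i; rewrite E.
Qed.

Lemma porbit_closed s x z : (s z \in porbit s x) = (z \in porbit s x).
Proof. by rewrite -!eq_porbit_mem -[s z]/((s ^+ 1) z) porbit_perm. Qed.

Lemma perm_onS A B s : A \subset B -> perm_on A s -> perm_on B s.
Proof. by move=> AB sA; apply: subset_trans AB. Qed.

Definition Good (P : pred nat) A s := [forall D in porbits s, (D \subset A) ==> P #|D|].
Definition Eset P A := [set s | perm_on A s & Good P A s].
Definition Xset C := [set c | perm_on C c & C \in porbits c].
Definition Sset P A C := [set s in Eset P A | C \in porbits s].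

Lemma prodE A C c r : perm_on C c -> perm_on (A :\: C) r -> forall x,
  (c * r) x = if x \in C then c x else r x.
Proof.
move=> cC rAC x; rewrite permM; case: ifP => xC.
  by rewrite (out_perm rAC) // inE (perm_closed _ cC) xC.
by rewrite (out_perm cC) ?xC.
Qed.

Lemma GoodP (P : pred nat) A s : reflect (forall y, porbit s y \subset A -> P #|porbit s y|) (Good P A s).
Proof.
apply: (iffP forall_inP) => [h y sA | h D /imsetP[y _ ->]]; last exact/implyP/h.
have hy : porbit s y \in porbits s by apply: imset_f.
by have := h _ hy; rewrite sA.
Qed.

Lemma porbitsP s C : reflect (exists x, C = porbit s x) (C \in porbits s).
Proof. by apply: (iffP imsetP) => [[x _ ->]|[x ->]]; exists x. Qed.

Lemma Sset_eq (P : pred nat) A C : C \subset A -> P #|C| ->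
  Sset P A C = (fun q : {perm T} * {perm T} => q.1 * q.2) @: setX (Xset C) (Eset P (A :\: C)).
Proof.
move=> CA PC; apply/setP => s; apply/idP/idP.
- rewrite !inE => /andP[/andP[sA /GoodP gs] /porbitsP[x0 Cx0]].
  have sC z : (s z \in C) = (z \in C) by rewrite Cx0 porbit_closed.
  have sAC z : (s z \in A :\: C) = (z \in A :\: C) by rewrite !inE sC (perm_closed _ sA).
  have NC : s \in 'N(C | 'P) by apply/astabsP => z; rewrite /aperm sC.
  have NAC : s \in 'N(A :\: C | 'P) by apply/astabsP => z; rewrite /aperm sAC.
  pose c := restr_perm C s; pose r := restr_perm (A :\: C) s.
  have cC : perm_on C c by apply: restr_perm_on.
  have rAC : perm_on (A :\: C) r by apply: restr_perm_on.
  have ce z : z \in C -> c z = s z by move=> zC; rewrite /c restr_permE.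
  have re z : z \in A :\: C -> r z = s z by move=> zC; rewrite /r restr_permE.
  apply/imsetP; exists (c, r); last first.
    apply/permP => z; rewrite (prodE cC rAC); case: ifP => zC; first by rewrite ce.
    have [zA|zA] := boolP (z \in A); first by rewrite re // inE zC.
    by rewrite (out_perm sA zA) (out_perm rAC) // inE (negbTE zA) andbF.
  have x0C : x0 \in C by rewrite Cx0 porbit_id.
  rewrite in_setX !inE cC rAC /=; apply/andP; split.
    apply/porbitsP; exists x0; rewrite {1}Cx0; apply: (porbit_agree (B := C)) => //.
      by move=> z; rewrite sC.
    by move=> z zC; rewrite ce.
  apply/GoodP => y yAC.
  have yB : y \in A :\: C by apply: (subsetP yAC); apply: porbit_id.
  have ey : porbit s y = porbit r y.
    apply: (porbit_agree (B := A :\: C)) => // z; first by rewrite sAC.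
    by move=> zB; rewrite re.
  by rewrite -ey; apply: gs; rewrite ey; apply: subset_trans (subsetDl A C).
- case/imsetP => -[c r]; rewrite in_setX !inE /= => /andP[/andP[cC Cc] /andP[rAC /GoodP gr]] ->.
  have cA : perm_on A c by apply: perm_onS cC.
  have rA : perm_on A r by apply: perm_onS rAC; apply: subsetDl.
  case/porbitsP: Cc => x0 Cx0.
  have cCC z : z \in C -> c z \in C by move=> zC; rewrite (perm_closed _ cC).
  have rAA z : z \in A :\: C -> r z \in A :\: C by move=> zC; rewrite (perm_closed _ rAC).
  have e1 z : z \in C -> c z = (c * r) z by move=> zC; rewrite (prodE cC rAC) zC.
  have e2 z : z \in A :\: C -> r z = (c * r) z.
    by move=> zC; rewrite (prodE cC rAC); move: zC; rewrite inE => /andP[/negbTE -> _].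
  have oC y : y \in C -> porbit (c * r) y = C.
    move=> yC; rewrite -(porbit_agree cCC e1 yC) Cx0; apply/eqP.
    by rewrite eq_porbit_mem -Cx0.
  rewrite perm_onM //=; apply/andP; split; last first.
    by apply/porbitsP; exists x0; rewrite oC // Cx0 porbit_id.
  apply/GoodP => y yA.
  have yA' : y \in A by apply: (subsetP yA); apply: porbit_id.
  have [yC|yC] := boolP (y \in C); first by rewrite oC.
  have yAC : y \in A :\: C by rewrite inE yC yA'.
  rewrite -(porbit_agree rAA e2 yAC); apply: gr.
  by apply: porbit_sub.
Qed.

Lemma card_Sset (P : pred nat) A C : C \subset A ->
  #|Sset P A C| = ((P #|C| : nat) * #|Xset C| * #|Eset P (A :\: C)|)%N.
Proof.
move=> CA; case PC: (P #|C|); last first.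
  rewrite mul0n; apply: eq_card0 => s; rewrite !inE.
  apply/negP => /andP[/andP[_ /GoodP gs] /porbitsP[x Cx]].
  by move: PC; rewrite Cx gs // -Cx.
rewrite mul1n Sset_eq // card_in_imset ?cardsX //.
move=> [c1 r1] [c2 r2]; rewrite !in_setX !inE /=.
move=> /andP[/andP[c1C _] /andP[r1A _]] /andP[/andP[c2C _] /andP[r2A _]] E.
have E' x := f_equal (fun p : {perm T} => p x) E.
have h x : c1 x = c2 x /\ r1 x = r2 x.
  have := E' x; rewrite /= (prodE c1C r1A) (prodE c2C r2A).
  case: ifP => xC; last by rewrite (out_perm c1C) ?xC // (out_perm c2C) ?xC.
  move=> ->; split=> //.
  by rewrite (out_perm r1A) ?(out_perm r2A) // inE xC.
by congr pair; apply/permP => x; case: (h x).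
Qed.
End Comb.

Section Count.
Variable T : finType.
Implicit Types (A B C D : {set T}) (s t c r : {perm T}).

Lemma sum_orbits A s : perm_on A s -> \sum_(D in porbits s | D \subset A) #|D| = #|A|.
Proof.
move=> sA.
have cl z : z \in A -> s z \in A by move=> zA; rewrite (perm_closed _ sA).
transitivity (\sum_(D in porbits s | D \subset A) \sum_(x in D) 1).
  by apply: eq_bigr => D _; rewrite sum1_card.
rewrite (exchange_big_dep xpredT) //=.
rewrite -sum1_card [RHS]big_mkcond; apply: eq_bigr => x _.
transitivity (\sum_(D | D == porbit s x) (x \in A : nat)).
  rewrite [RHS]big_mkcond [LHS]big_mkcond /=; apply: eq_bigr => D _.
  case: eqP => [->|neD].
    rewrite porbit_id andbT; case xA: (x \in A).
      by rewrite imset_f // porbit_sub.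
    case: ifP => // /andP[_ /subsetP h]; by rewrite h // porbit_id in xA.
  case: ifP => // /andP[/andP[/porbitsP[y eD] _] xy]; case: neD.
  by rewrite eD; apply/eqP; rewrite eq_porbit_mem porbit_sym -eD.
by rewrite (big_pred1 (porbit s x)) //; case: (x \in A).
Qed.

Lemma count_rec (P : pred nat) A :
  #|A| * #|Eset P A| = \sum_(C : {set T} | C \subset A) #|C| * #|Sset P A C|.
Proof.
rewrite mulnC -sum_nat_const.
transitivity (\sum_(s in Eset P A) \sum_(C : {set T} | C \subset A) (C \in porbits s) * #|C|).
  apply: eq_bigr => s; rewrite inE => /andP[sA _].
  rewrite -(sum_orbits sA) big_mkcond [RHS]big_mkcond /=; apply: eq_bigr => C _.
  by case: (C \in porbits s); case: (C \subset A); rewrite ?mul1n ?mul0n.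
rewrite exchange_big; apply: eq_bigr => C _.
rewrite -big_distrl mulnC /=; congr (_ * _).
rewrite -sum1_card [RHS]big_mkcond [LHS]big_mkcond /=; apply: eq_bigr => s _.
by rewrite !inE; case: (_ && _); case: (C \in porbits s).
Qed.

Lemma sum_by_size A (w : nat -> nat) :
  \sum_(C : {set T} | C \subset A) w #|C| = \sum_(j < #|A|.+1) 'C(#|A|, j) * w j.
Proof.
rewrite (partition_big (fun C => inord #|C| : 'I_#|A|.+1) xpredT) //=.
apply: eq_bigr => j _.
have -> : 'C(#|A|, j) = #|[set C : {set T} | C \subset A & #|C| == j]| by rewrite cards_draws.
rewrite -(sum1_card (mem [set C : {set T} | C \subset A & #|C| == j])) big_distrl /=.
apply: eq_big => C.
  rewrite inE; case CA: (C \subset A) => //=.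
  have := subset_leq_card CA; rewrite -ltnS => hC.
  by rewrite -(inj_eq val_inj) /= inordK.
move=> /andP[CA /eqP <-]; rewrite mul1n inordK // ltnS subset_leq_card //.
Qed.
End Count.

Lemma sum_const_fact a : \sum_(j < a.+1) 'C(a, j) * (if (j : nat) == 0 then 0 else j`! * (a - j)`!) = a * a`!.
Proof.
rewrite big_ord_recl /= muln0 add0n.
under eq_bigr => j _ do rewrite /bump /= add1n bin_fact //.
by rewrite big_const_ord iter_addn_0 mulnC.
Qed.

Section Cyc.
Variable T : finType.
Implicit Types (A B C D : {set T}).

Lemma Eset_true A : #|Eset xpredT A| = #|A|`!.
Proof.
rewrite -card_perm; apply: eq_card => s; rewrite !inE.
by rewrite andb_idr // => _; apply/forall_inP => D _; rewrite implybT.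
Qed.

Lemma Xset0 C : #|C| = 0 -> #|Xset C| = 0.
Proof.
move=> C0; apply: eq_card0 => c; rewrite !inE; apply/negP => /andP[_ /porbitsP[x Cx]].
by move: C0; rewrite Cx => /eqP; rewrite (negbTE (card_porbit_neq0 _ _)).
Qed.

Lemma cardsDsub A C : C \subset A -> #|A :\: C| = #|A| - #|C|.
Proof. by move=> CA; rewrite cardsD (setIidPr CA). Qed.

Lemma Xset_card : forall a C, #|C| = a.+1 -> #|Xset C| = a`!.
Proof.
move=> a; elim/ltn_ind: a => a IH A hA.
have key := count_rec xpredT A.
have wE C : C \subset A -> C != A ->
   #|C| * #|Sset xpredT A C| = (if #|C| == 0 then 0 else #|C|`! * (#|A| - #|C|)`!).
  move=> CA CnA; rewrite card_Sset // mul1n Eset_true cardsDsub //.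
  case: (posnP #|C|) => [->|Cp]; first by rewrite mul0n.
  have ltCA : #|C| < #|A| by rewrite proper_card // properEneq CnA.
  rewrite (IH #|C|.-1) ?prednK //; last by rewrite -ltnS -hA.
  by move: Cp; case: #|C| => // c _ /=; rewrite factS mulnA.
have hs := sum_by_size A (fun j => if j == 0 then 0 else j`! * (#|A| - j)`!).
rewrite sum_const_fact in hs.
rewrite Eset_true (bigD1 A) //= in key.
rewrite (bigD1 A) //= in hs.
rewrite (eq_bigr (fun C => if #|C| == 0 then 0 else #|C|`! * (#|A| - #|C|)`!)) in key; last first.
  by move=> C /andP[CA CnA]; rewrite wE.
rewrite key in hs.
move/eqP: hs; rewrite eqn_add2r => /eqP.
rewrite card_Sset // mul1n setDv Eset_true cards0 muln1 hA /= subnn fact0 muln1.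
by rewrite factS => /eqP; rewrite eqn_mul2l /= => /eqP.
Qed.
End Cyc.

Fixpoint dd n := match n with 0 => 1 | 1 => 0 | n'.+2 => n'.+1 ^ 2 * dd n' end.

Definition Tsum a := \sum_(j < a.+1) (~~ odd j) * a ^_ j * dd (a - j).

Lemma Tsum_eq a : Tsum a = a.+1 * dd a.
Proof.
elim/ltn_ind: a => -[|[|a]] IH; rewrite /Tsum.
- by rewrite big_ord_recl big_ord0.
- by rewrite !big_ord_recl big_ord0.
rewrite 2!big_ord_recl /=.
under eq_bigr => j _ do rewrite /bump /= !add1n /= negbK ffactSS ffactSS subSS subSS.
rewrite mul0n mul1n add0n ffactn0 mul1n.
rewrite (eq_bigr (fun j : 'I_a.+1 => a.+2 * a.+1 * ((~~ odd j) * a ^_ j * dd (a - j)))); last first.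
  by move=> j _; rewrite add0n; ring.
rewrite -big_distrr /=.
have := IH a (ltnW (ltnSn _)); rewrite /Tsum => ->.
simpl; ring.
Qed.

Lemma sum_v a : \sum_(j < a.+1) 'C(a, j) * (if (j : nat) == 0 then 0 else (~~ odd j) * j`! * dd (a - j)) = a * dd a.
Proof.
set S := \sum_(j < a.+1) _.
have h : S + dd a = Tsum a.
  rewrite /S /Tsum big_ord_recl [in RHS]big_ord_recl /= muln0 add0n ffactn0 subn0 mul1n addnC.
  congr (_ + _); first by rewrite mul1n.
  by apply: eq_bigr => j _; rewrite -bin_ffact; ring.
by apply/eqP; rewrite -(eqn_add2r (dd a)) h Tsum_eq mulSn addnC.
Qed.

Section Even.
Variable T : finType.
Implicit Types (A B C D : {set T}).

Definition evenP : pred nat := fun j => ~~ odd j.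

Lemma Eset_even : forall a A, #|A| = a -> #|Eset evenP A| = dd a.
Proof.
move=> a; elim/ltn_ind: a => -[|a] IH A hA.
  move/cards0_eq: hA => ->; rewrite /= -(fact0) -(cards0 T) -card_perm.
  apply: eq_card => s; rewrite !inE andb_idr // => _.
  apply/forall_inP => D /porbitsP[x ->]; apply/implyP => /subsetP h.
  by have := h x (porbit_id _ _); rewrite inE.
have key := count_rec evenP A.
rewrite (eq_bigr (fun C => if #|C| == 0 then 0 else (~~ odd #|C|) * #|C|`! * dd (#|A| - #|C|))) in key; last first.
  move=> C CA; rewrite card_Sset //.
  case: (posnP #|C|) => [->|Cp]; first by rewrite mul0n.
  rewrite (IH (#|A| - #|C|)) ?cardsDsub //; last by rewrite -hA ltn_subrL Cp hA.
  rewrite (@Xset_card _ #|C|.-1) ?prednK //.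
  by move: Cp; case: #|C| => // c _ /=; rewrite factS; ring.
rewrite (sum_by_size A (fun j => if j == 0 then 0 else (~~ odd j) * j`! * dd (#|A| - j))) in key.
rewrite sum_v hA in key.
by move/eqP: key; rewrite eqn_mul2l /= => /eqP.
Qed.
End Even.

Lemma double_count (T : finType) (P : pred nat) (A : {set T}) (Q : pred {set T}) :
  \sum_(s in Eset P A) #|[set C in porbits s | Q C]| =
  \sum_(C | Q C) #|Sset P A C|.
Proof.
transitivity (\sum_(s in Eset P A) \sum_(C | Q C) (C \in porbits s : nat)).
  apply: eq_bigr => s _; rewrite -sum1_card big_mkcond [RHS]big_mkcond /=.
  by apply: eq_bigr => C _; rewrite !inE; case: (C \in porbits s); case: (Q C).
rewrite exchange_big; apply: eq_bigr => C _.
rewrite -sum1_card [RHS]big_mkcond [LHS]big_mkcond /=; apply: eq_bigr => s _.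
by rewrite !inE; case: (_ && _); case: (C \in porbits s).
Qed.

Lemma sumY n k : (0 < k)%N -> ~~ odd k -> (k <= n)%N ->
  (\sum_(s in even_cycle_perms n) Yk k s = n ^_ k * dd (n - k))%N.
Proof.
move=> k0 ek kn.
have -> : even_cycle_perms n = Eset evenP [set: 'I_n].
  apply/setP => s; rewrite !inE.
  have -> : perm_on [set: 'I_n] s = true by apply/subsetP => x; rewrite inE.
  by rewrite /Good /=; apply: eq_forallb_in => D _; rewrite subsetT.
rewrite /Yk -big_distrr /= /Xk double_count.
rewrite (eq_bigr (fun _ => (k.-1)`! * dd (n - k))); last first.
  move=> C /eqP Ck; rewrite card_Sset ?subsetT // Ck /evenP ek mul1n.
  rewrite (@Xset_card _ k.-1) ?prednK // (@Eset_even _ (n - k)) //.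
  by rewrite cardsDsub ?subsetT // cardsT card_ord Ck.
rewrite sum_nat_const.
have -> : #|(fun i : {set 'I_n} => #|i| == k)| = 'C(n, k).
  by rewrite -[n in RHS]card_ord -card_draws; apply: eq_card => C; rewrite inE.
rewrite -bin_ffact; move: k0; case: k {ek kn} => // k _ /=; rewrite factS; ring.
Qed.

Import Order.TTheory GRing.Theory Num.Theory.

Lemma dd_pos m : (0 < dd m.*2)%N.
Proof. by elim: m => // m IH; rewrite doubleS /= muln_gt0 IH expn_gt0. Qed.

Local Open Scope ring_scope.

Definition Qx (R : realType) (p j : nat) : R :=
  (((p + j).*2 ^_ j.*2 * dd p.*2)%N)%:R / (dd (p + j).*2)%:R.

Lemma Qx0 (R : realType) p : Qx R p 0 = 1.
Proof.
rewrite /Qx addn0 ffactn0 mul1n divff // pnatr_eq0 -lt0n dd_pos //.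
Qed.

Lemma QxS (R : realType) p j :
  Qx R p j.+1 = Qx R p j * ((p + j).*2.+2)%:R / ((p + j).*2.+1)%:R.
Proof.
rewrite /Qx addnS !doubleS ffactSS ffactSS /=.
have h1 : (dd (p + j).*2)%:R != 0 :> R by rewrite pnatr_eq0 -lt0n dd_pos.
have h2 : ((p + j).*2.+1)%:R != 0 :> R by rewrite pnatr_eq0.
rewrite !natrM /=.
field; rewrite h1 andbT; by move: h2; rewrite -natr1 addrC.
Qed.

Lemma Qx_bounds (R : realType) (p : nat) : (0 < p)%N -> forall j,
  let x := Qx R p j in let M : R := (p + j)%:R in let P : R := p%:R in
  [/\ 0 <= x, x ^+ 2 * P <= M & (4 * P - 1) * M ^+ 2 <= x ^+ 2 * P ^+ 2 * (4 * M - 1)].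
Proof.
move=> p0; elim=> [|j IH] /=.
  by rewrite Qx0 addn0 expr1n !mul1r; split => //; rewrite mulrC.
case: IH => x0 hU hL.
set x := Qx R p j in x0 hU hL *; set M : R := (p + j)%:R in hU hL *.
set P : R := p%:R in hU hL *.
have P1 : 1 <= P by rewrite /P ler1n.
have M1 : P <= M by rewrite /M ler_nat leq_addr.
have eM : (p + j.+1)%:R = M + 1 :> R by rewrite addnS -natr1.
have e2 : ((p + j).*2.+2)%:R = 2 * M + 2 :> R by rewrite -!natr1 -muln2 natrM; ring.
have e1 : ((p + j).*2.+1)%:R = 2 * M + 1 :> R by rewrite -!natr1 -muln2 natrM; ring.
rewrite QxS e1 e2 eM -/x.
set r := (2 * M + 2) / (2 * M + 1).
have hr : r * (2 * M + 1) = 2 * M + 2 by rewrite /r divfK //; lra.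
have r0 : 0 <= r by rewrite /r divr_ge0 //; lra.
have -> : x * (2 * M + 2) / (2 * M + 1) = x * r by rewrite /r mulrA.
have hq : 0 < (2 * M + 1) ^+ 2 by rewrite exprn_gt0 //; lra.
split; first exact: mulr_ge0.
- rewrite -subr_ge0 -(pmulr_lge0 _ hq).
  have -> : (M + 1 - (x * r) ^+ 2 * P) * (2 * M + 1) ^+ 2 =
      (M + 1) * (2 * M + 1) ^+ 2 - x ^+ 2 * P * (r * (2 * M + 1)) ^+ 2 by ring.
  rewrite hr; nra.
- rewrite -subr_ge0.
  have hq2 : 0 < (2 * M + 1) ^+ 2 * (4 * M - 1) by apply: mulr_gt0 => //; lra.
  rewrite -(pmulr_lge0 _ hq2).
  have -> : ((x * r) ^+ 2 * P ^+ 2 * (4 * (M + 1) - 1) - (4 * P - 1) * (M + 1) ^+ 2) *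
      ((2 * M + 1) ^+ 2 * (4 * M - 1)) =
      x ^+ 2 * P ^+ 2 * (4 * M + 3) * (4 * M - 1) * (r * (2 * M + 1)) ^+ 2
      - (4 * P - 1) * (M + 1) ^+ 2 * (2 * M + 1) ^+ 2 * (4 * M - 1) by ring.
  rewrite hr.
  have -> : x ^+ 2 * P ^+ 2 * (4 * M + 3) * (4 * M - 1) * (2 * M + 2) ^+ 2
      - (4 * P - 1) * (M + 1) ^+ 2 * (2 * M + 1) ^+ 2 * (4 * M - 1) =
      (x ^+ 2 * P ^+ 2 * (4 * M - 1) - (4 * P - 1) * M ^+ 2) * ((2 * M + 2) ^+ 2 * (4 * M + 3))
      + (4 * P - 1) * (M + 1) ^+ 2 by ring.
  apply: addr_ge0; last by apply: mulr_ge0; [lra | apply: sqr_ge0].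
  apply: mulr_ge0; first by rewrite subr_ge0.
  apply: mulr_ge0; [apply: sqr_ge0 | lra].
Qed.

Import Order.TTheory GRing.Theory Num.Theory.
Local Open Scope ring_scope.

Lemma card_even n : #|even_cycle_perms n| = dd n.
Proof.
have -> : even_cycle_perms n = Eset evenP [set: 'I_n].
  apply/setP => s; rewrite !inE.
  have -> : perm_on [set: 'I_n] s = true by apply/subsetP => x; rewrite inE.
  by rewrite /Good /=; apply: eq_forallb_in => D _; rewrite subsetT.
by rewrite (@Eset_even _ n) // cardsT card_ord.
Qed.

Lemma EeYk_eq (R : realType) n k : (0 < k)%N -> ~~ odd k -> (k <= n)%N ->
  EeYk R n k = (n ^_ k * dd (n - k))%:R / (dd n)%:R.
Proof. by move=> *; rewrite /EeYk -natr_sum sumY // card_even. Qed.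

Lemma final_est (R : realType) (x s P M : R) : 0 <= x -> 1 <= P -> P <= M -> 0 < s ->
  s ^+ 2 = P / M -> x ^+ 2 * P <= M -> (4 * P - 1) * M ^+ 2 <= x ^+ 2 * P ^+ 2 * (4 * M - 1) ->
  `|x - s^-1| <= (4 * P)^-1 * s^-1.
Proof.
move=> x0 P1 PM s0 hs hU hL.
have M0 : 0 < M by lra.
set z := x * s.
have z0 : 0 <= z by rewrite mulr_ge0 // ltW.
have ez : z ^+ 2 * M = x ^+ 2 * P by rewrite exprMn hs; field; lra.
have zU : z ^+ 2 <= 1.
  by rewrite -(ler_pM2r M0) mul1r ez.
have zL : (4 * P - 1) <= z ^+ 2 * (4 * P).
  have : (4 * P - 1) * M ^+ 2 <= x ^+ 2 * P ^+ 2 * (4 * M) by nra.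
  have -> : x ^+ 2 * P ^+ 2 * (4 * M) = z ^+ 2 * (4 * P) * M ^+ 2.
    have -> : z ^+ 2 * (4 * P) * M ^+ 2 = (z ^+ 2 * M) * (4 * P * M) by ring.
    by rewrite ez; ring.
  by rewrite ler_pM2r // exprn_gt0.
have z1 : z <= 1 by nra.
have -> : x - s^-1 = (z - 1) * s^-1 by rewrite /z; field; lra.
rewrite normrM (gtr0_norm (x := s^-1)) ?invr_gt0 // ler_pM2r ?invr_gt0 //.
rewrite ler0_norm ?subr_le0 //.
have hP : 0 < 4 * P by lra.
rewrite -(ler_pM2r hP) mulVf; last by lra.
nra.
Qed.

Theorem proposition3p4 (R : realType) (eps : R) :
  0 < eps < 1 ->
  exists (C : R) (N : nat), forall n k : nat,
    (N <= n)%N -> ~~ odd n -> ~~ odd k -> (0 < k)%N ->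
    (k%:R / n%:R < 1 - eps) ->
    `| EeYk R n k - (Num.sqrt (1 - k%:R / n%:R))^-1 |
      <= C / n%:R * (Num.sqrt (1 - k%:R / n%:R))^-1.
Proof.
case/andP => e0 e1; exists eps^-1, 1%N => n k hN on ok k0 hk.
have n0 : (0 < n)%N by [].
have nR : 0 < n%:R :> R by rewrite ltr0n.
have kR : k%:R < (1 - eps) * n%:R :> R by rewrite -ltr_pdivrMr.
have kn : (k < n)%N by rewrite -(ltr_nat R); nra.
set m := n./2; set p := ((n - k)./2)%N.
have hn : n = m.*2 by rewrite -[LHS](odd_double_half n) (negbTE on).
have hnk : (n - k = p.*2)%N.
  by rewrite -[LHS](odd_double_half (n - k)) oddB ?(ltnW kn) // (negbTE on) (negbTE ok).
have p0 : (0 < p)%N by rewrite -double_gt0 -hnk subn_gt0.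
have pm : (p <= m)%N by rewrite -leq_double -hn -hnk leq_subr.
set j := (m - p)%N.
have hm : (m = p + j)%N by rewrite /j subnKC.
have hk2 : k = j.*2 by rewrite /j doubleB -hn -hnk subKn // (ltnW kn).
rewrite EeYk_eq //; last exact: ltnW.
have -> : (((n ^_ k * dd (n - k))%N)%:R / (dd n)%:R : R) = Qx R p j.
  by rewrite /Qx -hm -hn -hk2 -hnk.
have [x0 hU hL] := Qx_bounds R p0 j.
rewrite -hm in hU hL.
have en : n%:R = 2 * m%:R :> R by rewrite hn -muln2 natrM mulrC.
have ek : k%:R = 2 * m%:R - 2 * p%:R :> R.
  have h1 : (k + p.*2 = n)%N by rewrite -hnk subnKC // ltnW.
  have h2 : k%:R + 2 * p%:R = n%:R :> R by rewrite -h1 natrD -muln2 natrM mulrC.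
  by rewrite -en -h2; ring.
have P1 : 1 <= p%:R :> R by rewrite ler1n.
have PM : p%:R <= m%:R :> R by rewrite ler_nat.
have hs : 1 - k%:R / n%:R = p%:R / m%:R :> R by rewrite ek en; field; lra.
rewrite hs.
set s := Num.sqrt (p%:R / m%:R).
have s0 : 0 < s by rewrite sqrtr_gt0 divr_gt0 //; lra.
have hs2 : s ^+ 2 = p%:R / m%:R by rewrite sqr_sqrtr // divr_ge0 //; lra.
apply: le_trans (final_est x0 P1 PM s0 hs2 hU hL) _.
rewrite ler_pM2r ?invr_gt0 //.
have hnk' : n%:R * eps < 4 * p%:R :> R by rewrite en; nra.
rewrite -div1r ler_pdivrMr; last by lra.
rewrite mulrAC ler_pdivlMr //.
rewrite mul1r -(ler_pM2l e0) mulrA mulfV ?mul1r; first by nra.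
by rewrite gt_eqF.
Qed.
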